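(* Let $G$ be a cubic graph of order $2n$ and let $\mathcal M=\{M_1,\ldots,M_t\}$ be a family of matchings of $G$ whose union is $E(G)$ and such that $\sum_{i=1}^t |M_i|=(n-1)t$. Then there exist $t$ matchings of $G$, each of size exactly $n-1$, whose union is $E(G)$.
   Context: All graphs are finite, simple, connected and cubic. *)

(* Defs.v *)
From mathcomp Require Import all_boot.
Set Implicit Arguments. Unset Strict Implicit. Unset Printing Implicit Defensive.

Definition simple_graph (T : finType) (e : rel T) : Prop :=
  symmetric e /\ irreflexive e.

Definition cubic (T : finType) (e : rel T) : Prop :=
  forall x : T, #|[set y | e x y]| = 3.

Definition connected_graph (T : finType) (e : rel T) : Prop :=
  forall x y : T, connect e x y.

Definition edges (T : finType) (e : rel T) : {set {set T}} :=
  [set A : {set T} | [exists x, exists y, e x y && (A == [set x; y])]].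

Definition matching (T : finType) (e : rel T) (M : {set {set T}}) : Prop :=
  M \subset edges e /\ trivIset M.

(* Main.v *)
Require Import Defs.
From mathcomp Require Import all_boot zify.
Set Implicit Arguments. Unset Strict Implicit. Unset Printing Implicit Defensive.

Definition pwd (T : finType) (X : {set {set T}}) :=
  {in X &, forall a b : {set T}, a != b -> [disjoint a & b]}.

Lemma touchP (T : finType) (a b : {set T}) :
  ~~ [disjoint a & b] -> exists v, v \in a /\ v \in b.
Proof. by rewrite -setI_eq0 => /set0Pn [v]; rewrite inE => /andP[]; exists v. Qed.

Lemma sum_ind (I : finType) (A : {pred I}) (P : pred I) :
  \sum_(i in A) (P i : nat) = #|[set i in A | P i]|.
Proof.
rewrite -sum1dep_card big_mkcondr; apply: eq_bigr => i _; by case: (P i).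
Qed.

Lemma deg_le (T : finType) (x : {set T}) (Y : {set {set T}}) : pwd Y ->
  #|[set z in Y | ~~ [disjoint x & z]]| <= #|x|.
Proof.
move=> pY; set S := [set z in Y | _].
rewrite -sum1_card -[#|x|]sum1_card.
apply: (@leq_trans (\sum_(z in S) \sum_(v in x) (v \in z : nat))).
  apply: leq_sum => z; rewrite inE => /andP[_ /touchP [v [vx vz]]].
  by rewrite (bigD1 v) //= vz.
rewrite exchange_big /=; apply: leq_sum => v _.
rewrite sum_ind; apply/card_le1_eqP => a b; rewrite !inE.
case/andP => /andP[aY _] va; case/andP => /andP[bY _] vb.
apply/eqP; apply: contraT => nab.
by rewrite (disjointFr (pY b a bY aY nab) vb) in va.
Qed.

Lemma card3 (T : finType) (S : {set T}) a b c :
  a \in S -> b \in S -> c \in S -> a != b -> a != c -> b != c -> 3 <= #|S|.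
Proof.
move=> aS bS cS ab ac bc.
have -> : 3 = #|a |: (b |: [set c])|.
  rewrite !cardsU1 cards1 !inE negb_or ab ac bc //.
by apply: subset_leq_card; apply/subsetP => z; rewrite !inE => /or3P[] /eqP->.
Qed.

Lemma core (T : finType) k : forall X Y : {set {set T}}, #|Y| <= k ->
  {in X, forall x : {set T}, #|x| <= 2} -> pwd X -> pwd Y -> #|X| < #|Y| ->
  exists P Q : {set {set T}}, [/\ P \subset X, Q \subset Y, #|Q| = #|P|.+1,
    (forall x q, x \in X :\: P -> q \in Q -> [disjoint x & q]) &
    (forall y p, y \in Y :\: Q -> p \in P -> [disjoint y & p])].
Proof.
elim: k => [|k IH] X Y hk h2 pX pY hlt; first by move: (leq_trans hlt hk).
have hsum : \sum_(y in Y) #|[set x in X | ~~ [disjoint x & y]]| <= 2 * #|X|.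
  under eq_bigr => y _ do rewrite -sum_ind.
  rewrite exchange_big /= mulnC -sum_nat_const; apply: leq_sum => x xX.
  rewrite sum_ind; exact: leq_trans (deg_le x pY) (h2 x xX).
have [y yY hy] : exists2 y, y \in Y & #|[set x in X | ~~ [disjoint x & y]]| <= 1.
  case: (boolP [exists y in Y, #|[set x in X | ~~ [disjoint x & y]]| <= 1]).
    by case/exists_inP => y; exists y.
  move/exists_inPn => hall; exfalso.
  have : \sum_(y in Y) 2 <= \sum_(y in Y) #|[set x in X | ~~ [disjoint x & y]]|.
    by apply: leq_sum => y yY; move: (hall y yY); rewrite -ltnNge.
  rewrite sum_nat_const => h; move: (leq_trans h hsum).
  by rewrite mulnC leq_pmul2l // leqNgt hlt.
move: hy; rewrite leq_eqVlt ltnS leqn0 cards_eq0; case/orP => [/cards1P [x hx] | /eqP h0].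
  have : x \in [set x0 in X | ~~ [disjoint x0 & y]] by rewrite hx inE.
  rewrite inE => /andP [xX txy].
  have honly : forall x', x' \in X -> ~~ [disjoint x' & y] -> x' = x.
    move=> x' x'X tx'; have : x' \in [set x0 in X | ~~ [disjoint x0 & y]].
      by rewrite inE x'X.
    by rewrite hx => /set1P.
  have hY : #|Y| = #|Y :\ y|.+1 by rewrite (cardsD1 y Y) yY.
  have hX : #|X| = #|X :\ x|.+1 by rewrite (cardsD1 x X) xX.
  have [|||||P1 [Q1 [sP sQ cQ c1 c2]]] := IH (X :\ x) (Y :\ y).
  - by rewrite -ltnS -hY.
  - by move=> z; rewrite in_setD1 => /andP[_ /h2].
  - by move=> a b; rewrite !in_setD1 => /andP[_ aX] /andP[_ bX]; apply: pX.
  - by move=> a b; rewrite !in_setD1 => /andP[_ aX] /andP[_ bX]; apply: pY.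
  - by rewrite -ltnS -hX -hY.
  have xP1 : x \notin P1.
    by apply/negP => /(subsetP sP); rewrite in_setD1 eqxx.
  have yQ1 : y \notin Q1.
    by apply/negP => /(subsetP sQ); rewrite in_setD1 eqxx.
  case: (boolP [exists q in Q1, ~~ [disjoint x & q]]).
    case/exists_inP => q0 q0Q tq0.
    have q0y : q0 != y by move: (subsetP sQ q0 q0Q); rewrite in_setD1 => /andP[].
    have q0Y : q0 \in Y by move: (subsetP sQ q0 q0Q); rewrite in_setD1 => /andP[].
    exists (x |: P1), (y |: Q1); split.
    - rewrite subUset sub1set xX; exact: subset_trans sP (subD1set X x).
    - rewrite subUset sub1set yY; exact: subset_trans sQ (subD1set Y y).
    - by rewrite !cardsU1 xP1 yQ1 cQ.
    - move=> x' q; rewrite in_setD in_setU1 negb_or => /andP[/andP[nx' nP] x'X].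
      case/setU1P => [->|qQ].
        by apply: contraT => t; move: nx'; rewrite (honly x' x'X t) eqxx.
      by apply: c1 qQ; rewrite in_setD nP in_setD1 nx' x'X.
    - move=> y' p; rewrite in_setD in_setU1 negb_or => /andP[/andP[ny' nQ] y'Y].
      case/setU1P => [->|pP]; last first.
        by apply: c2 pP; rewrite in_setD nQ in_setD1 ny' y'Y.
      apply: contraT => t; rewrite disjoint_sym in t; exfalso.
      have := leq_trans (deg_le x pY) (h2 x xX).
      apply/negP; rewrite -ltnNge.
      apply: (@card3 _ _ y q0 y').
      + by rewrite inE yY txy.
      + by rewrite inE q0Y tq0.
      + by rewrite inE y'Y t.
      + by rewrite eq_sym.
      + by rewrite eq_sym.
      + by apply: contraNneq nQ => <-.
  move/exists_inPn => hnq.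
  exists P1, Q1; split.
  - exact: subset_trans sP (subD1set X x).
  - exact: subset_trans sQ (subD1set Y y).
  - exact: cQ.
  - move=> x' q; rewrite in_setD => /andP[nP x'X] qQ.
    case: (eqVneq x' x) => [->|nx']; first by move: (hnq q qQ); rewrite negbK.
    by apply: c1 qQ; rewrite in_setD nP in_setD1 nx' x'X.
  - move=> y' p; rewrite in_setD => /andP[nQ y'Y] pP.
    case: (eqVneq y' y) => [->|ny']; last first.
      by apply: c2 pP; rewrite in_setD nQ in_setD1 ny' y'Y.
    move: (subsetP sP p pP); rewrite in_setD1 => /andP[px pXX].
    apply: contraT => t; rewrite disjoint_sym in t.
    by move: px; rewrite (honly p pXX t) eqxx.
exists set0, [set y]; split.
- exact: sub0set.
- by rewrite sub1set.
- by rewrite cards0 cards1.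
- move=> x q; rewrite in_setD => /andP[_ xX] /set1P ->.
  have : x \notin [set x in X | ~~ [disjoint x & y]] by rewrite h0 inE.
  by rewrite inE xX negbK.
- by move=> y' p _; rewrite inE.
Qed.

Lemma edge_prop (T : finType) (e : rel T) (z : {set T}) :
  z \in edges e -> #|z| <= 2 /\ z != set0.
Proof.
rewrite inE => /existsP [x /existsP [y /andP [_ /eqP ->]]]; split.
  by rewrite cards2; case: (_ != _).
by apply/set0Pn; exists x; rewrite !inE eqxx.
Qed.

Lemma disj_self (T : finType) (z : {set T}) : z != set0 -> ~~ [disjoint z & z].
Proof. by move=> nz; apply: contra nz => /disjoint_setI0; rewrite setIid => ->. Qed.

Lemma exch (T : finType) (e : rel T) (A B : {set {set T}}) :
  matching e A -> matching e B -> #|A| < #|B| ->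
  exists A' B', [/\ matching e A', matching e B', #|A'| = #|A|.+1,
     #|B'| = #|B|.-1 & A' :|: B' = A :|: B].
Proof.
move=> [eA /trivIsetP tA] [eB /trivIsetP tB] hlt.
have h2 : {in A, forall x : {set T}, #|x| <= 2}.
  by move=> x /(subsetP eA) /edge_prop [].
have [P [Q [sP sQ cQ c1 c2]]] := core (leqnn #|B|) h2 tA tB hlt.
have nzA : forall z, z \in A -> z != set0 by move=> z /(subsetP eA) /edge_prop [].
have nzB : forall z, z \in B -> z != set0 by move=> z /(subsetP eB) /edge_prop [].
have d1 : (A :\: P) :&: Q = set0.
  apply/setP => z; rewrite !inE; apply/negP => /andP [/andP [zP zA] zQ].
  have := c1 z z; rewrite in_setD zP zA zQ => /(_ isT isT).
  by apply/negP; apply: disj_self; apply: nzA.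
have d2 : (B :\: Q) :&: P = set0.
  apply/setP => z; rewrite !inE; apply/negP => /andP [/andP [zQ zB] zP].
  have := c2 z z; rewrite in_setD zQ zB zP => /(_ isT isT).
  by apply/negP; apply: disj_self; apply: nzB.
have cP : #|P| <= #|A| by apply: subset_leq_card.
have cQ' : #|Q| <= #|B| by apply: subset_leq_card.
exists ((A :\: P) :|: Q), ((B :\: Q) :|: P); split.
- split.
    by rewrite subUset (subset_trans (subsetDl A P) eA) (subset_trans sQ eB).
  apply/trivIsetP => a b; rewrite !inE => /orP [/andP[aP aA] | aQ] /orP [/andP[bP bA] | bQ].
  + exact: tA.
  + by move=> _; apply: c1 => //; rewrite in_setD aP aA.
  + by move=> _; rewrite disjoint_sym; apply: c1 => //; rewrite in_setD bP bA.
  + by apply: tB; apply: (subsetP sQ).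
- split.
    by rewrite subUset (subset_trans (subsetDl B Q) eB) (subset_trans sP eA).
  apply/trivIsetP => a b; rewrite !inE => /orP [/andP[aQ aB] | aP] /orP [/andP[bQ bB] | bP].
  + exact: tB.
  + by move=> _; apply: c2 => //; rewrite in_setD aQ aB.
  + by move=> _; rewrite disjoint_sym; apply: c2 => //; rewrite in_setD bQ bB.
  + by apply: tA; apply: (subsetP sP).
- rewrite cardsU d1 cards0 cardsDS //; lia.
- rewrite cardsU d2 cards0 cardsDS //; lia.
- apply/setP => z; rewrite !inE.
  move: (subsetP sP z) (subsetP sQ z).
  case: (z \in P); case: (z \in Q); case: (z \in A); case: (z \in B) => //= h h';
    by [move: (h isT) | move: (h' isT)].
Qed.

Lemma two_point (R : Type) (idx : R) (op : Monoid.com_law idx) t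
  (f g : 'I_t -> R) (i j : 'I_t) : i != j ->
  (forall k, k != i -> k != j -> f k = g k) ->
  \big[op/idx]_k f k = op (f i) (op (f j) (\big[op/idx]_(k | (k != i) && (k != j)) g k)).
Proof.
move=> ij hfg; rewrite (bigD1 i) //= (bigD1 j) /=; last by rewrite eq_sym.
by congr (op _ (op _ _)); apply: eq_bigr => k /andP [ki kj]; apply: hfg.
Qed.

Lemma main (T : finType) (e : rel T) (n t : nat) k :
  forall M : 'I_t -> {set {set T}},
  \sum_(i < t) ((#|M i| - (n-1)) + ((n-1) - #|M i|)) <= k ->
  (forall i, matching e (M i)) ->
  \bigcup_(i < t) M i = edges e ->
  \sum_(i < t) #|M i| = (n - 1) * t ->
  exists N : 'I_t -> {set {set T}},
    (forall i, matching e (N i) /\ #|N i| = n - 1) /\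
    \bigcup_(i < t) N i = edges e.
Proof.
elim: k => [|k IH] M hphi HM Hunion Hsum.
  exists M; split=> // i; split=> //.
  move: hphi; rewrite leqn0 sum_nat_eq0 => /forallP /(_ i) /=; lia.
have hconst : \sum_(i < t) (n - 1) = (n - 1) * t by rewrite sum_nat_const card_ord mulnC.
case: (boolP [forall i, #|M i| == n - 1]) => [/forallP hall | hnall].
  exists M; split=> // i; split=> //; exact/eqP.
have [i hi] : exists i, #|M i| < n - 1.
  apply/existsP; apply: contraR hnall; rewrite negb_exists => /forallP hge.
  have : \sum_(i < t) (#|M i| - (n - 1)) == 0.
    rewrite sumnB; first by rewrite Hsum hconst subnn.
    by move=> i0 _; move: (hge i0); rewrite -leqNgt.
  rewrite sum_nat_eq0 => /forallP hz; apply/forallP => i0.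
  move: (hz i0) (hge i0) => /=; lia.
have [j hj] : exists j, n - 1 < #|M j|.
  apply/existsP; apply: contraR hnall; rewrite negb_exists => /forallP hge.
  have : \sum_(i < t) ((n - 1) - #|M i|) == 0.
    rewrite sumnB; first by rewrite Hsum hconst subnn.
    by move=> i0 _; move: (hge i0); rewrite -leqNgt.
  rewrite sum_nat_eq0 => /forallP hz; apply/forallP => i0.
  move: (hz i0) (hge i0) => /=; lia.
have ij : i != j by apply: contraTneq hi => ->; rewrite -leqNgt ltnW.
have [A' [B' [mA mB cA cB hU]]] := exch (HM i) (HM j) (ltn_trans hi hj).
pose N := fun k0 => if k0 == i then A' else if k0 == j then B' else M k0.
have Ni : N i = A' by rewrite /N eqxx.
have Nj : N j = B' by rewrite /N eqxx eq_sym (negbTE ij).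
have Nk : forall k0, k0 != i -> k0 != j -> N k0 = M k0.
  by move=> k0 ki kj; rewrite /N (negbTE ki) (negbTE kj).
have cN : forall k0, k0 != i -> k0 != j -> #|N k0| = #|M k0| by move=> k0 ? ?; rewrite Nk.
have dN : forall k0, k0 != i -> k0 != j ->
   (#|N k0| - (n-1)) + ((n-1) - #|N k0|) = (#|M k0| - (n-1)) + ((n-1) - #|M k0|).
  by move=> k0 ? ?; rewrite Nk.
apply: (IH N).
- rewrite (two_point _ ij dN).
  move: hphi; rewrite (two_point _ ij (fun k0 _ _ => erefl _)) Ni Nj cA cB.
  rewrite /=; set R := \sum_(k0 < t | _) _; move: R #|M i| #|M j| hi hj => R a b; clear; rewrite -!subn1. lia.
- by move=> k0; rewrite /N; case: (k0 == i) => //; case: (k0 == j).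
- rewrite (two_point _ ij Nk) Ni Nj /= setUA hU -Hunion.
  by rewrite (two_point _ ij (fun k0 _ _ => erefl _)) /= setUA.
- rewrite (two_point _ ij cN) Ni Nj cA cB -Hsum.
  rewrite (two_point _ ij (fun k0 _ _ => erefl _)) /=; set R := \sum_(k0 < t | _) _.
  move: R #|M i| #|M j| hi hj => R a b; clear; rewrite -!subn1; lia.
Qed.

Unset Implicit Arguments.

Theorem lemma1 (T : finType) (e : rel T) (n t : nat)
  (Hsimple : simple_graph e) (Hcubic : cubic e) (Hconn : connected_graph e)
  (Horder : #|T| = 2 * n)
  (M : 'I_t -> {set {set T}})
  (HM : forall i, matching e (M i))
  (Hunion : \bigcup_(i < t) M i = edges e)
  (Hsum : \sum_(i < t) #|M i| = (n - 1) * t) :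
  exists N : 'I_t -> {set {set T}},
    (forall i, matching e (N i) /\ #|N i| = n - 1) /\
    \bigcup_(i < t) N i = edges e.
Proof.
exact: (main (leqnn _) HM Hunion Hsum).
Qed.
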